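(* Let $\mathcal{S}=(X,\xrightarrow{\Sigma},\le)$ be a very-WSTS and $I_0\in\mathrm{Idl}(X)$. (1) For all $y,z\in X$, $w\in\Sigma^*$ and states $c$ of $\mathcal{A}_{I_0}$: if $y\xrightarrow{w}z$ and $y\in\mathrm{ideal}(c)$, then there is a state $d$ of $\mathcal{A}_{I_0}$ such that $d$ can be reached from $c$ by reading $w$ in $\mathcal{A}_{I_0}$ and $z\in\mathrm{ideal}(d)$. (2) For all $z\in X$, $w\in\Sigma^*$ and states $c,d$ of $\mathcal{K}_{I_0}$: if $d$ can be reached from $c$ by reading $w$ in $\mathcal{K}_{I_0}$ and $z\in\mathrm{ideal}(d)$, then there exist $y\in\mathrm{ideal}(c)$, a word $w'$ with $w\preceq w'$, and $z'\ge z$ such that $y\xrightarrow{w'}z'$.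
   Context: A (labeled, ordered) transition system is $\mathcal{S}=(X,\xrightarrow{\Sigma},\le)$: $X$ a set, $\Sigma$ a finite alphabet, relations $\xrightarrow{a}\subseteq X\times X$ ($a\in\Sigma$), $\le$ a quasi-ordering. Relations extend to words ($x\xrightarrow{\varepsilon}x$; $x\xrightarrow{wa}y$ iff $x\xrightarrow{w}x'\xrightarrow{a}y$ for some $x'$). $\mathrm{Post}(x,w)=\{y:x\xrightarrow{w}y\}$, extended to sets by union; $\downarrow D=\{x:x\le y,\ y\in D\}$. $u\preceq v$ means $u$ is a (scattered) subword of $v$. WSTS: $\le$ is a wqo and $x\xrightarrow{a}y$, $x'\ge x$ imply $x'\xrightarrow{w}y'$ for some $w$, $y'\ge y$. Strong monotonicity: $x\xrightarrow{a}y$, $x'\ge x$ imply $x'\xrightarrow{a}y'$ with $y'\ge y$; strong-strict: additionally $x'>x$ gives such $y'>y$. Deterministic: $|\mathrm{Post}(x,a)|\le1$. Ideals: nonempty downward-closed directed subsets; $\mathrm{Idl}(X)$ their set. $\mathrm{IdealDecomp}(D)$: the finite set of maximal ideals in a downward-closed $D$ (for $X$ wqo). Completion $\widehat{\mathcal{S}}=(\mathrm{Idl}(X),\Rightarrow_\Sigma,\subseteq)$, $I\xRightarrow{a}J$ iff $J\in\mathrm{IdealDecomp}(\downarrow\mathrm{Post}(I,a))$, extended to words; if deterministic, $w(I)$ is the unique $J$ with $I\xRightarrow{w}J$ when defined. Acceleration candidate: strictly increasing sequence of ideals; $\mathrm{Idl}_0(X)=\mathrm{Idl}(X)$, $\mathrm{Idl}_n(X)$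 = unions of acceleration candidates in $\mathrm{Idl}_{n-1}(X)$; finitely many levels if some $\mathrm{Idl}_n(X)=\emptyset$. $w^\infty(I)=\bigcup_kw^k(I)$ if $I\subset w(I)$, else $I$ ($w\in\Sigma^+$). Very-WSTS: WSTS with strong monotonicity whose completion is a deterministic WSTS (with $\subseteq$ a wqo on $\mathrm{Idl}(X)$) with strong-strict monotonicity, and $\mathrm{Idl}(X)$ has finitely many levels. Ideal Karp-Miller algorithm on input $(\mathcal{S},I_0)$ (terminating for very-WSTS): builds a rooted tree with node labels $(\mathrm{ideal}(c),\mathrm{numaccel}(c))\in\mathrm{Idl}(X)\times\mathbb{N}$ and letter-labeled arcs, starting from root $r:(I_0,0)$. While some node $c:(I,n)$ is unmarked: if a proper ancestor $c'$ has $\mathrm{ideal}(c')=I$, mark $c$; otherwise, if a proper ancestor $c'$ has $\mathrm{ideal}(c')\subset I$ and $\mathrm{numaccel}(c')=n$, relabel $c$ by $(w^\infty(I),n+1)$ where $w$ is the arc-label word from $c'$ to $c$ ($c$ is accelerated because of $c'$); then, with $(I,n)$ the current label, add for each $a\in\Sigma$ with $a(I)$ defined a child $d:(a(I),n)$ via an $a$-arc; mark $c$. $\mathcal{T}_{I_0}$ is the returned tree. The stuttering automaton $\mathcal{A}_{I_0}$: states are the nodes of $\mathcal{T}_{I_0}$, all accepting, initial state the root, transitions the arcs of $\mathcal{T}_{I_0}$ plus an $\varepsilon$-transition from each leaf $c$ to any ancestor $c'$ with $\mathrm{ideal}(c)=\mathrm{ideal}(c')$. The Karp-Miller automaton $\mathcal{K}_{I_0}$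 additionally has an $\varepsilon$-transition from each accelerated node $c$ to the ancestor $c'$ because of which it was accelerated. ''Reaching $d$ from $c$ by reading $w$'' allows $\varepsilon$-transitions. *)

(* Defs.v *)
(* finite alphabet = finType, words = seq,
   subword = subseq, ancestor = prefix. Sets are Prop-valued predicates. *)
From mathcomp Require Import all_boot.


Unset Printing Implicit Defensive.

Definition quasi_order {T : Type} (le : T -> T -> Prop) : Prop :=
  (forall x, le x x) /\ (forall x y z, le x y -> le y z -> le x z).

Definition wqo {T : Type} (le : T -> T -> Prop) : Prop :=
  quasi_order le /\
  forall f : nat -> T, exists i j, (i < j)%N /\ le (f i) (f j).

Definition lt_of {T : Type} (le : T -> T -> Prop) (x y : T) : Prop :=
  le x y /\ ~ le y x.

Fixpoint steps {S T : Type} (step : S -> T -> T -> Prop) (w : seq S) (x y : T)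
  : Prop :=
  match w with
  | [::] => x = y
  | a :: w' => exists x', step a x x' /\ steps step w' x' y
  end.

Definition wsts {S T : Type} (step : S -> T -> T -> Prop) (le : T -> T -> Prop)
  : Prop :=
  wqo le /\
  forall a x y x', step a x y -> le x x' ->
    exists w y', steps step w x' y' /\ le y y'.

Definition strong_mono {S T : Type} (step : S -> T -> T -> Prop)
  (le : T -> T -> Prop) : Prop :=
  forall a x y x', step a x y -> le x x' -> exists y', step a x' y' /\ le y y'.

Definition strong_strict_mono {S T : Type} (step : S -> T -> T -> Prop)
  (le : T -> T -> Prop) : Prop :=
  strong_mono step le /\
  forall a x y x', step a x y -> lt_of le x x' ->
    exists y', step a x' y' /\ lt_of le y y'.

Definition deterministic {S T : Type} (step : S -> T -> T -> Prop) : Prop :=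
  forall a x y y', step a x y -> step a x y' -> y = y'.

Definition subset {X : Type} (A B : X -> Prop) : Prop := forall x, A x -> B x.
Definition ssubset {X : Type} (A B : X -> Prop) : Prop :=
  subset A B /\ ~ subset B A.

Definition downclosed {X : Type} (le : X -> X -> Prop) (D : X -> Prop) : Prop :=
  forall x y, le x y -> D y -> D x.

Definition directed {X : Type} (le : X -> X -> Prop) (D : X -> Prop) : Prop :=
  forall x y, D x -> D y -> exists z, D z /\ le x z /\ le y z.

Definition is_ideal {X : Type} (le : X -> X -> Prop) (I : X -> Prop) : Prop :=
  (exists x, I x) /\ downclosed le I /\ directed le I.

Record Idl {X : Type} (le : X -> X -> Prop) := mkIdl {
  ival : X -> Prop;
  ivalP : is_ideal le ival }.
Arguments ival {X le}.

Definition isub {X : Type} {le : X -> X -> Prop} (I J : Idl le) : Prop :=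
  subset (ival I) (ival J).

Definition dpost {S X : Type} (step : S -> X -> X -> Prop) (le : X -> X -> Prop)
  (I : X -> Prop) (a : S) : X -> Prop :=
  fun x => exists y z, I y /\ step a y z /\ le x z.

Definition in_ideal_decomp {X : Type} (le : X -> X -> Prop) (D : X -> Prop)
  (J : Idl le) : Prop :=
  subset (ival J) D /\
  forall K : Idl le, isub J K -> subset (ival K) D -> isub K J.

Definition cstep {S X : Type} (step : S -> X -> X -> Prop) (le : X -> X -> Prop)
  (a : S) (I J : Idl le) : Prop :=
  in_ideal_decomp le (dpost step le (ival I) a) J.

(* w^oo(I) = J  (w nonempty in uses) *)
Definition winf {S X : Type} (step : S -> X -> X -> Prop) (le : X -> X -> Prop)
  (w : seq S) (I J : Idl le) : Prop :=
  ((exists K, steps (cstep step le) w I K /\ ssubset (ival I) (ival K)) /\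
   forall x, ival J x <->
     exists k K, steps (cstep step le) (flatten (nseq k w)) I K /\ ival K x)
  \/
  (~ (exists K, steps (cstep step le) w I K /\ ssubset (ival I) (ival K)) /\
   J = I).

Fixpoint level {X : Type} (le : X -> X -> Prop) (n : nat) : (X -> Prop) -> Prop :=
  match n with
  | 0 => is_ideal le
  | m.+1 => fun J => exists f : nat -> (X -> Prop),
      (forall k, level le m (f k)) /\
      (forall k, ssubset (f k) (f k.+1)) /\
      (forall x, J x <-> exists k, f k x)
  end.

Definition finitely_many_levels {X : Type} (le : X -> X -> Prop) : Prop :=
  exists n, forall J, ~ level le n J.

Definition very_wsts {S X : Type} (step : S -> X -> X -> Prop)
  (le : X -> X -> Prop) : Prop :=
  wsts step le /\ strong_mono step le /\
  wsts (cstep step le) (@isub X le) /\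
  deterministic (cstep step le) /\
  strong_strict_mono (cstep step le) (@isub X le) /\
  finitely_many_levels le.

(* ---------- Karp-Miller trees ----------
   A node is identified with the word of arc labels from the root
   (each node has at most one a-child for each letter a). *)
Record kmtree (S : finType) {X : Type} (le : X -> X -> Prop) := KMTree {
  node : seq S -> Prop;
  lab : seq S -> Idl le;       (* ideal(c), final label *)
  nacc : seq S -> nat;         (* numaccel(c), final label *)
  ilab : seq S -> Idl le;      (* ideal with which c was created *)
  inum : seq S -> nat;         (* numaccel with which c was created *)
  accfrom : seq S -> option (seq S) (* Some c' : c accelerated because of c' *)
}.
Arguments node {S X le}. Arguments lab {S X le}. Arguments nacc {S X le}.
Arguments ilab {S X le}. Arguments inum {S X le}. Arguments accfrom {S X le}.

Definition proper_anc {S : finType} (c' c : seq S) : bool :=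
  prefix c' c && (size c' < size c)%N.

(* T is a tree returned by some run of the Ideal Karp-Miller algorithm on
   (step, le, I0). *)
Definition km_output {S : finType} {X : Type} (step : S -> X -> X -> Prop)
  (le : X -> X -> Prop) (I0 : Idl le) (T : kmtree S le) : Prop :=
  (exists s : seq (seq S), forall c, node T c -> c \in s) /\
  node T [::] /\
  (forall c a, node T (rcons c a) -> node T c) /\
  ilab T [::] = I0 /\ inum T [::] = 0 /\
  (forall c a, node T (rcons c a) ->
     cstep step le a (lab T c) (ilab T (rcons c a)) /\
     inum T (rcons c a) = nacc T c) /\
  (forall c, node T c ->
     let I := ilab T c in let n := inum T c in
     (* marked because of an equal proper ancestor: no change, no children *)
     ((exists c', proper_anc c' c /\ lab T c' = I) /\
        lab T c = I /\ nacc T c = n /\ accfrom T c = None /\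
        (forall a, ~ node T (rcons c a)))
     \/
     (~ (exists c', proper_anc c' c /\ lab T c' = I) /\
      (* acceleration because of c', or none possible *)
      ((exists c', proper_anc c' c /\ ssubset (ival (lab T c')) (ival I) /\
          nacc T c' = n /\ accfrom T c = Some c' /\
          winf step le (drop (size c') c) I (lab T c) /\ nacc T c = n.+1)
       \/
       (~ (exists c', proper_anc c' c /\ ssubset (ival (lab T c')) (ival I) /\
            nacc T c' = n) /\
        accfrom T c = None /\ lab T c = I /\ nacc T c = n)) /\
      (forall a, node T (rcons c a) <-> exists J, cstep step le a (lab T c) J))).

Definition leaf {S : finType} {X : Type} {le : X -> X -> Prop}
  (T : kmtree S le) (c : seq S) : Prop :=
  node T c /\ forall a, ~ node T (rcons c a).

(* epsilon-transitions of the stuttering automaton A_{I0} *)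
Definition eps_A {S : finType} {X : Type} {le : X -> X -> Prop}
  (T : kmtree S le) (c c' : seq S) : Prop :=
  leaf T c /\ prefix c' c /\ lab T c = lab T c'.

(* epsilon-transitions of the Karp-Miller automaton K_{I0} *)
Definition eps_K {S : finType} {X : Type} {le : X -> X -> Prop}
  (T : kmtree S le) (c c' : seq S) : Prop :=
  eps_A T c c' \/ (node T c /\ accfrom T c = Some c').

Inductive reach {S : finType} {X : Type} {le : X -> X -> Prop}
  (T : kmtree S le) (eps : seq S -> seq S -> Prop)
  : seq S -> seq S -> seq S -> Prop :=
  | reach_refl c : node T c -> reach T eps c [::] c
  | reach_eps c c' w d : eps c c' -> reach T eps c' w d -> reach T eps c w d
  | reach_arc c a w d : node T c -> node T (rcons c a) ->
      reach T eps (rcons c a) w d -> reach T eps c (a :: w) d.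

(* Main.v *)
Require Import Defs.
From mathcomp Require Import all_boot.
From Stdlib Require Import Classical ClassicalEpsilon.
From Stdlib Require List.
Import Defs.
Set Warnings "-notation-overridden".

Definition sR {X} (le : X -> X -> Prop) (D' D : X -> Prop) : Prop :=
  downclosed le D' /\ subset D' D /\ exists x, D x /\ ~ D' x.

Lemma sR_wf {X} (le : X -> X -> Prop) : wqo le -> well_founded (sR le).
Proof.
move=> hw D0; apply: NNPP => hD0.
have nxt : forall D, ~ Acc (sR le) D -> exists D', sR le D' D /\ ~ Acc (sR le) D'.
  move=> D hD; apply: NNPP => hn; apply: hD; constructor => D' hR.
  apply: NNPP => hA; apply: hn; by exists D'.
pose T := {D : X -> Prop | ~ Acc (sR le) D}.
have f : forall t : T, {t' : T | sR le (proj1_sig t') (proj1_sig t)}.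
  move=> [D hD]; case: (constructive_indefinite_description _ (nxt D hD)) => D' [h1 h2].
  by exists (exist _ D' h2).
pose s := fun n => iter n (fun t => proj1_sig (f t)) (exist _ D0 hD0).
have hs : forall n, sR le (proj1_sig (s n.+1)) (proj1_sig (s n)).
  move=> n; rewrite /s iterS; exact: proj2_sig (f _).
have g : forall n, {x | proj1_sig (s n) x /\ ~ proj1_sig (s n.+1) x}.
  move=> n; apply: constructive_indefinite_description; exact: (hs n).2.2.
have chain : forall i k, subset (proj1_sig (s (i.+1 + k))) (proj1_sig (s i.+1)).
  move=> i; elim=> [|k IH]; first by rewrite addn0.
  move=> x hx; apply: IH; rewrite addnS in hx; exact: (hs _).2.1 _ hx.
have [i [j [hij hle]]] := hw.2 (fun n => proj1_sig (g n)).
have ej : j = i.+1 + (j - i.+1) by rewrite subnKC.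
have hxj : proj1_sig (s (i.+1 + (j - i.+1))) (proj1_sig (g j)).
  rewrite -ej; exact: (proj2_sig (g j)).1.
have := chain _ _ _ hxj => hxj'.
apply: (proj2_sig (g i)).2.
exact: (hs i).1 _ _ hle hxj'.
Qed.

Definition fin_union {X} (le : X->X->Prop) (D : X -> Prop) (L : seq (X -> Prop)) :=
  (forall I, List.In I L -> is_ideal le I) /\
  (forall x, D x <-> exists I, List.In I L /\ I x).

Lemma decomp {X} (le : X -> X -> Prop) : wqo le ->
  forall D, downclosed le D -> exists L, fin_union le D L.
Proof.
move=> hw D; elim: (@sR_wf _ le hw D) => {}D _ IH hdc.
have [[refl trans] _] := hw.
case: (classic (exists x, D x)) => [hne|hemp]; last first.
  exists [::]; split => // x; split => [hx|[I [[] _]]]. by case: hemp; exists x.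
case: (classic (directed le D)) => [hdir|hndir].
  exists [:: D]; split. move=> I [<-|[]]. by split.
  move=> x; split => [hx|[I [[<-|[]] hx]]] //. by exists D; split => //; left.
have [x [y [hx [hy hno]]]] : exists x y, D x /\ D y /\ ~ exists z, D z /\ le x z /\ le y z.
  apply: NNPP => h; apply: hndir => a b ha hb; apply: NNPP => h2; apply: h.
  exists a, b; split; first exact: ha. split; first exact: hb.
  move=> h3; apply: h2; case: h3 => z [? [? ?]]; by exists z.
have dc1 : forall u, downclosed le (fun z => D z /\ ~ le u z).
  move=> u a b hab [hb hn]; split; first exact: hdc hab hb.
  move=> hua; apply: hn; exact: trans hua hab.
have [L1 [h1i h1c]] : exists L, fin_union le (fun z => D z /\ ~ le x z) L.
  apply: IH => //; split => //; split; first by move=> z [].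
  exists x; split => //; case=> _; apply; exact: refl.
have [L2 [h2i h2c]] : exists L, fin_union le (fun z => D z /\ ~ le y z) L.
  apply: IH => //; split => //; split; first by move=> z [].
  exists y; split => //; case=> _; apply; exact: refl.
exists (L1 ++ L2); split.
  move=> I hI; case: (List.in_app_or _ _ _ hI) => ?; [exact: h1i|exact: h2i].
move=> z; split => [hz|[I [hI hIz]]].
  case: (classic (le x z)) => hxz.
    case: (classic (le y z)) => hyz; first by case: hno; exists z.
    have [I [? ?]] := (h2c z).1 (conj hz hyz).
    exists I; split => //; apply: List.in_or_app; by right.
  have [I [? ?]] := (h1c z).1 (conj hz hxz).
  exists I; split => //; apply: List.in_or_app; by left.
case: (List.in_app_or _ _ _ hI) => hI'.
  by have [] := (h1c z).2 (ex_intro _ I (conj hI' hIz)).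
by have [] := (h2c z).2 (ex_intro _ I (conj hI' hIz)).
Qed.

Lemma ideal_in_union {X} (le : X -> X -> Prop) : wqo le -> forall L J,
  (forall I, List.In I L -> downclosed le I) -> is_ideal le J ->
  (forall x, J x -> exists I, List.In I L /\ I x) ->
  exists I, List.In I L /\ subset J I.
Proof.
move=> hw; elim=> [|I L IH] J hdc hJ hcov.
  case: hJ => [[x hx] _]. by case: (hcov x hx) => ? [[]].
case: (classic (subset J I)) => hsub; first by exists I; split => //; left.
have [x0 [hx0 hnx0]] : exists x0, J x0 /\ ~ I x0.
  apply: NNPP => h; apply: hsub => x hx; apply: NNPP => hn; apply: h; by exists x.
have [I' [hI' hJI']] : exists I', List.In I' L /\ subset J I'.
  apply: IH => //; first by move=> I'' h; apply: hdc; right.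
  move=> x hx; case: hJ => [_ [_ hd]]; have [z [hz [hxz hx0z]]] := hd x x0 hx hx0.
  have [I'' [[<-|hI''] hzI]] := hcov z hz.
    by case: hnx0; apply: (hdc I) hx0z hzI; left.
  exists I''; split => //; apply: (hdc I'') hxz hzI; by right.
by exists I'; split => //; right.
Qed.

Lemma max_sel {X} (P : (X->Prop) -> Prop) (L : seq (X->Prop)) :
  (exists I, List.In I L /\ P I) ->
  exists I, List.In I L /\ P I /\
    forall I', List.In I' L -> P I' -> subset I I' -> subset I' I.
Proof.
elim: L => [|a L IH] [I [hI hP]]; first by case: hI.
case: (classic (exists I, List.In I L /\ P I)) => [hex|hnex].
  have [m [hm [hPm hmax]]] := IH hex.
  case: (classic (P a /\ subset m a)) => [[hPa hma]|hn].
    exists a; split; first by left. split; first exact: hPa.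
    move=> I' hI'' hPI' haI'.
    have [ea|hI'] : a = I' \/ List.In I' L := hI''.
      by rewrite -ea.
    move=> z hz; apply: (hma); apply: (hmax I' hI' hPI') => //.
    move=> u hu; apply: haI'; exact: hma.
  exists m; split; first by right. split; first exact: hPm.
  move=> I' hI'' hPI' hmI'.
  have [ea|hI'] : a = I' \/ List.In I' L := hI''.
    by case: hn; rewrite ea.
  exact: hmax.
case: hI => [ea|hI]; last by case: hnex; exists I.
subst a; exists I; split; first by left. split; first exact: hP.
move=> I' hI'' hPI' _.
have [ea|hI'] : I = I' \/ List.In I' L := hI''; first by rewrite ea.
by case: hnex; exists I'.
Qed.

Arguments decomp {X le}.
Arguments ideal_in_union {X le}.
Lemma exists_cstep {S X : Type} (step : S -> X -> X -> Prop) (le : X -> X -> Prop) :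
  wqo le -> forall (I : Idl le) a y y', ival I y -> step a y y' ->
  exists J, cstep step le a I J /\ ival J y'.
Proof.
move=> hw I a y y' hy hs.
have [[refl trans] _] := hw.
pose D := dpost step le (ival I) a.
have hdc : downclosed le D.
  move=> u v huv [y0 [z0 [h1 [h2 h3]]]]; exists y0, z0; split => //; split => //.
  exact: trans huv h3.
have [L [hLi hLc]] := decomp hw D hdc.
have hDy : D y' by exists y, y'; split => //; split => //; exact: refl.
have [m [hm [hmy hmax]]] := max_sel (fun I => I y') L ((hLc y').1 hDy).
have hmi := hLi m hm.
exists (@mkIdl _ le m hmi); split => //=; split.
  move=> x hx; apply/(hLc x).2; by exists m.
move=> K hmK hKD.
have [I' [hI' hKI']] : exists I', List.In I' L /\ subset (ival K) I'.
  apply: (ideal_in_union hw).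
  - move=> I'' h; exact: (hLi I'' h).2.1.
  - exact: ivalP.
  - move=> x hx; exact: (hLc x).1 (hKD x hx).
have hmI' : subset m I' by move=> x hx; apply: hKI'; exact: hmK.
have := hmax I' hI' (hmI' _ hmy) hmI'.
move=> h x hx; exact: h _ (hKI' x hx).
Qed.

Lemma steps_mono {S X : Type} (step : S -> X -> X -> Prop) (le : X -> X -> Prop) :
  quasi_order le -> strong_mono step le -> forall w x z x', steps step w x z -> le x x' ->
  exists z', steps step w x' z' /\ le z z'.
Proof.
move=> [refl trans] hsm; elim=> [|a w IH] x z x' /=.
  by move=> -> h; exists x'.
move=> [u [hu hw]] hxx'.
have [u' [hu' huu']] := hsm _ _ _ _ hu hxx'.
have [z' [hz' hzz']] := IH _ _ _ hw huu'.
by exists z'; split => //; exists u'.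
Qed.

Arguments steps_mono {S X step le}.
Lemma steps_cat {S X : Type} (step : S -> X -> X -> Prop) : forall u v x y z,
  steps step u x y -> steps step v y z -> steps step (u ++ v) x z.
Proof.
elim=> [|a u IH] v x y z /=; first by move=> ->.
move=> [x' [h1 h2]] h3; exists x'; split => //; exact: IH h2 h3.
Qed.

Lemma csteps_sound {S X : Type} (step : S -> X -> X -> Prop) (le : X -> X -> Prop) :
  quasi_order le -> strong_mono step le -> forall w (I K : Idl le) x,
  steps (cstep step le) w I K -> ival K x ->
  exists y z, ival I y /\ steps step w y z /\ le x z.
Proof.
move=> hq hsm; have [refl trans] := hq.
elim=> [|a w IH] I K x /=.
  by move=> -> hx; exists x, x; split => //; split => //; exact: refl.
move=> [I1 [h1 h2]] hx.
have [y1 [z1 [hy1 [hs1 hxz1]]]] := IH _ _ _ h2 hx.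
have [y [u [hy [hu hyu]]]] := h1.1 _ hy1.
have [z2 [hs2 hz12]] := steps_mono hq hsm _ _ _ _ hs1 hyu.
exists y, z2; split => //; split; first by exists u.
exact: trans hxz1 hz12.
Qed.

Arguments csteps_sound {S X step le}.
Arguments exists_cstep {S X step le}.

Lemma lab_iter {S : finType} {X : Type} (step : S -> X -> X -> Prop)
  (le : X -> X -> Prop) (I0 : Idl le) (T : kmtree S le) c x :
  km_output step le I0 T -> node T c -> ival (lab T c) x ->
  exists u K, steps (cstep step le) u (ilab T c) K /\ ival K x.
Proof.
move=> [_ [_ [_ [_ [_ [_ hproc]]]]]] hc hx.
move: (hproc c hc); cbv zeta => H.
case: H => [[_ [hl _]]|[_ [[[c' [_ [_ [_ [_ [hw _]]]]]]|[_ [_ [hl _]]]] _]]].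
- by exists [::], (ilab T c); rewrite -hl.
- case: hw => [[_ hJ]|[_ e]].
    have [k [K [h1 h2]]] := (hJ x).1 hx.
    by exists (flatten (nseq k (drop (size c') c))), K.
  by exists [::], (ilab T c); rewrite -e.
- by exists [::], (ilab T c); rewrite -hl.
Qed.

Arguments lab_iter {S X step le I0 T c x}.
Lemma lab_ilab {S : finType} {X : Type} (step : S -> X -> X -> Prop)
  (le : X -> X -> Prop) (I0 : Idl le) (T : kmtree S le) c :
  km_output step le I0 T -> node T c -> subset (ival (ilab T c)) (ival (lab T c)).
Proof.
move=> [_ [_ [_ [_ [_ [_ hproc]]]]]] hc x hx.
move: (hproc c hc); cbv zeta => H.
case: H => [[_ [hl _]]|[_ [[[c' [_ [_ [_ [_ [hw _]]]]]]|[_ [_ [hl _]]]] _]]].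
- by rewrite hl.
- case: hw => [[_ hJ]|[_ e]]; last by rewrite e.
  apply/(hJ x).2; by exists 0, (ilab T c).
- by rewrite hl.
Qed.

Arguments lab_ilab {S X step le I0 T c}.
Lemma lab_sound {S : finType} {X : Type} (step : S -> X -> X -> Prop)
  (le : X -> X -> Prop) (I0 : Idl le) (T : kmtree S le) c a x :
  quasi_order le -> strong_mono step le ->
  km_output step le I0 T -> node T (rcons c a) -> ival (lab T (rcons c a)) x ->
  exists y v z, ival (lab T c) y /\ subseq [:: a] v /\ steps step v y z /\ le x z.
Proof.
move=> hq hsm hkm hc hx.
have [refl trans] := hq.
have [u [K [hu hK]]] := lab_iter hkm hc hx.
have [y0 [z0 [hy0 [hs0 hxz0]]]] := csteps_sound hq hsm _ _ _ _ hu hK.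
case: hkm => [_ [_ [_ [_ [_ [hchild _]]]]]].
have [hcs _] := hchild c a hc.
have [y [t [hy [ht hyt]]]] := hcs.1 _ hy0.
have [z1 [hs1 hz01]] := steps_mono hq hsm _ _ _ _ hs0 hyt.
exists y, (a :: u), z1; split => //; split; first by rewrite /= eqxx sub0seq.
split; first by exists t.
exact: trans hxz0 hz01.
Qed.

Arguments lab_sound {S X step le I0 T c a x}.
Lemma node_prefix {S : finType} {X : Type} (step : S -> X -> X -> Prop)
  (le : X -> X -> Prop) (I0 : Idl le) (T : kmtree S le) :
  km_output step le I0 T -> forall s c, node T (c ++ s) -> node T c.
Proof.
move=> [_ [_ [hpre _]]]; elim/last_ind=> [|s b IH] c; first by rewrite cats0.
rewrite -rcons_cat => h; apply: IH; exact: hpre _ _ h.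
Qed.

Arguments node_prefix {S X step le I0 T}.
Lemma node_children {S : finType} {X : Type} (step : S -> X -> X -> Prop)
  (le : X -> X -> Prop) (I0 : Idl le) (T : kmtree S le) c :
  km_output step le I0 T -> node T c ->
  ((forall a, ~ node T (rcons c a)) /\
     exists c', proper_anc c' c /\ lab T c' = lab T c)
  \/ (forall a, node T (rcons c a) <-> exists J, cstep step le a (lab T c) J).
Proof.
move=> [_ [_ [_ [_ [_ [_ hproc]]]]]] hc.
move: (hproc c hc); cbv zeta => H.
case: H => [[[c' [hp he]] [hl [_ [_ hno]]]]|[_ [_ hiff]]]; last by right.
left; split => //; exists c'; split => //; by rewrite hl.
Qed.

Arguments node_children {S X step le I0 T c}.
Lemma child_of {S : finType} {X : Type} (step : S -> X -> X -> Prop)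
  (le : X -> X -> Prop) (I0 : Idl le) (T : kmtree S le) c a y y' :
  wqo le -> deterministic (cstep step le) -> km_output step le I0 T ->
  (forall a, node T (rcons c a) <-> exists J, cstep step le a (lab T c) J) ->
  ival (lab T c) y -> step a y y' ->
  node T (rcons c a) /\ ival (lab T (rcons c a)) y'.
Proof.
move=> hw hdet hkm hiff hy hs.
have [J [hJ hJy]] := exists_cstep hw _ _ _ _ hy hs.
have hn : node T (rcons c a) by apply/hiff; exists J.
split => //.
have hkm' := hkm; case: hkm' => [_ [_ [_ [_ [_ [hchild _]]]]]].
have e := hdet _ _ _ _ hJ (hchild c a hn).1.
apply: (lab_ilab hkm hn); by rewrite -e.
Qed.
Arguments child_of {S X step le I0 T c a y y'}.

Lemma acc_sub {S : finType} {X : Type} (step : S -> X -> X -> Prop)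
  (le : X -> X -> Prop) (I0 : Idl le) (T : kmtree S le) c c' :
  km_output step le I0 T -> node T c -> accfrom T c = Some c' ->
  subset (ival (lab T c')) (ival (ilab T c)).
Proof.
move=> [_ [_ [_ [_ [_ [_ hproc]]]]]] hc hacc.
move: (hproc c hc); cbv zeta => H.
case: H => [[_ [_ [_ [e _]]]]|[_ [[[c'' [_ [hss [_ [e _]]]]]|[_ [e _]]] _]]].
- by rewrite hacc in e.
- rewrite hacc in e; case: e => ->; exact: hss.1.
- by rewrite hacc in e.
Qed.

Theorem proposition11 (S : finType) (X : Type) (step : S -> X -> X -> Prop)
  (le : X -> X -> Prop) (I0 : Idl le) (T : kmtree S le) :
  very_wsts step le ->
  km_output step le I0 T ->
  (forall (y z : X) (w : seq S) (c : seq S),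
     steps step w y z -> node T c -> ival (lab T c) y ->
     exists d, reach T (eps_A T) c w d /\ ival (lab T d) z)
  /\
  (forall (z : X) (w : seq S) (c d : seq S),
     node T c -> reach T (eps_K T) c w d -> ival (lab T d) z ->
     exists (y : X) (w' : seq S) (z' : X),
       ival (lab T c) y /\ subseq w w' /\ le z z' /\ steps step w' y z').
Proof.
move=> hv hkm.
have [[hw _] [hsm [_ [hdet _]]]] := hv.
have hq := hw.1.
have [refl trans] := hq.
split.
  move=> y z w; elim: w y => [|a w IH] y c /= hs hc hy.
    exists c; split; [by constructor | by rewrite -hs].
  case: hs => y' [hya hs].
  have [c0 [hc0 [hn0 [hch hy']]]] : exists c0, (c0 = c \/ eps_A T c c0) /\
      node T c0 /\ node T (rcons c0 a) /\ ival (lab T (rcons c0 a)) y'.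
    case: (node_children hkm hc) => [[hno [c' [hpa he]]]|hiff].
      move/andP: hpa => [hp hsz]; case/prefixP: hp => s es.
      have hc' : node T c' by apply: (node_prefix hkm s); rewrite -es.
      case: (node_children hkm hc') => [[hno' _]|hiff'].
        exfalso; case: s es => [|b s] es.
          by rewrite es cats0 ltnn in hsz.
        apply: (hno' b); apply: (node_prefix hkm s); by rewrite cat_rcons -es.
      have hy1 : ival (lab T c') y by rewrite he.
      have [h1 h2] := child_of hw hdet hkm hiff' hy1 hya.
      exists c'; split => //; right; split; first by split.
      split; last by [].
      by rewrite es prefix_prefix.
    have [h1 h2] := child_of hw hdet hkm hiff hy hya.
    by exists c; split => //; left.
  have [d [hr hd]] := IH y' _ hs hch hy'.
  exists d; split => //.
  case: hc0 => [e|heps].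
    subst c0; exact: reach_arc.
  apply: reach_eps heps _; exact: reach_arc.
move=> z w c d _ hr; elim: hr z => {c w d}.
- move=> c hc z hz; exists z, [::], z.
  split; [done|split; [done|split; [exact: refl|done]]].
- move=> c c' w d heps hr IH z hz.
  have [y [w' [z' [hy rest]]]] := IH z hz.
  exists y, w', z'; split => //.
  case: heps => [[_ [_ e]]|[hcn hacc]]; first by rewrite e.
  apply: (lab_ilab hkm hcn); exact: (acc_sub _ _ _ _ _ _ hkm hcn hacc).
- move=> c a w d hc hca hr IH z hz.
  have [y1 [w1 [z1 [hy1 [hsub [hzz1 hs1]]]]]] := IH z hz.
  have [y [v [u [hy [hav [hsv hy1u]]]]]] := lab_sound hq hsm hkm hca hy1.
  have [z2 [hs2 hz12]] := steps_mono hq hsm _ _ _ _ hs1 hy1u.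
  exists y, (v ++ w1), z2; split => //; split.
    exact: (cat_subseq hav hsub).
  split; first exact: trans hzz1 hz12.
  exact: steps_cat hsv hs2.
Qed.
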